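(* Let $1\le r\le n$, let $p=(p_1,\dots,p_n)$ be a size vector, and let $A,B\subseteq S_p$ form a maximal pair of $r$-cross-intersecting families. If $i\in[n]$ is a relevant coordinate for $A$ or for $B$, then there exists $l\in[p_i]$ such that $$|\{x\in A: x_i\ne l\}|\le |A|/p_i\quad\text{and}\quad |\{y\in B: y_i\ne l\}|\le |B|/p_i.$$
   Context: $[m]=\{1,\dots,m\}$. A size vector is a sequence of integers $p=(p_1,\dots,p_n)$ with $p_i\ge 2$ for all $i$; $S_p=[p_1]\times\cdots\times[p_n]$. Two vectors $x,y\in S_p$ are $r$-intersecting if $|\{i: x_i=y_i\}|\ge r$; families $A,B\subseteq S_p$ are $r$-cross-intersecting if every $x\in A$, $y\in B$ are $r$-intersecting. A pair $(A,B)$ of $r$-cross-intersecting families in $S_p$ is maximal if it maximizes $|A|\cdot|B|$ among all $r$-cross-intersecting pairs in $S_p$. A coordinate $i$ is irrelevant for $A\subseteq S_p$ if whenever two elements of $S_p$ differ only in coordinate $i$ and one lies in $A$, so does the other; otherwise $i$ is relevant for $A$. *)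

(* Defs.v *)
From mathcomp Require Import all_boot.
Set Implicit Arguments. Unset Strict Implicit. Unset Printing Implicit Defensive.

(* Size vector p : 'I_n -> nat (with p i >= 2 assumed in theorems);
   coordinate i ranges over [p_i], represented 0-based as 'I_(p i). *)
Definition Sp (n : nat) (p : 'I_n -> nat) : finType :=
  {dffun forall i : 'I_n, 'I_(p i)}.

Definition agree n (p : 'I_n -> nat) (x y : Sp p) : nat :=
  #|[set i : 'I_n | x i == y i]|.

Definition r_intersecting n (p : 'I_n -> nat) (r : nat) (x y : Sp p) : bool :=
  r <= agree x y.

Definition cross_int n (p : 'I_n -> nat) (r : nat) (A B : {set Sp p}) : Prop :=
  forall x y, x \in A -> y \in B -> r_intersecting r x y.

Definition maximal_pair n (p : 'I_n -> nat) (r : nat) (A B : {set Sp p}) : Prop :=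
  cross_int r A B /\
  forall A' B' : {set Sp p}, cross_int r A' B' -> #|A'| * #|B'| <= #|A| * #|B|.

Definition differ_only_at n (p : 'I_n -> nat) (i : 'I_n) (x y : Sp p) : bool :=
  [forall j : 'I_n, (j != i) ==> (x j == y j)].

Definition irrelevant n (p : 'I_n -> nat) (i : 'I_n) (A : {set Sp p}) : Prop :=
  forall x y : Sp p, differ_only_at i x y -> x \in A -> y \in A.

Definition relevant n (p : 'I_n -> nat) (i : 'I_n) (A : {set Sp p}) : Prop :=
  ~ irrelevant i A.

(* Main.v *)
Require Import Defs.
From mathcomp Require Import all_boot zify.
Set Implicit Arguments. Unset Strict Implicit. Unset Printing Implicit Defensive.

Section Upd.
Variables (n : nat) (p : 'I_n -> nat) (i : 'I_n).

Definition upd (x : Sp p) (c : 'I_(p i)) : Sp p := [ffun j => dfwith (fun k => x k) c j].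

Lemma upd_i x c : upd x c i = c.
Proof. by rewrite /upd ffunE dfwith_in. Qed.

Lemma upd_j x c j : i != j -> upd x c j = x j.
Proof. by move=> h; rewrite /upd ffunE dfwith_out. Qed.

Lemma upd_upd x c d : upd (upd x c) d = upd x d.
Proof.
apply/ffunP=> j; case: (eqVneq i j) => [<-|h]; first by rewrite !upd_i.
by rewrite !upd_j.
Qed.

Lemma upd_id x : upd x (x i) = x.
Proof.
apply/ffunP=> j; case: (eqVneq i j) => [<-|h]; first by rewrite !upd_i.
by rewrite !upd_j.
Qed.


Lemma agree_upd x y c d : c != d -> agree (upd x c) (upd y d) <= agree x y.
Proof.
move=> cd; apply: subset_leq_card; apply/subsetP=> j; rewrite !inE.
case: (eqVneq i j) => [<-|h]; first by rewrite !upd_i (negbTE cd).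
by rewrite !upd_j.
Qed.

Lemma differ_upd x y c : differ_only_at i x y -> upd x c = upd y c.
Proof.
move=> /forallP h; apply/ffunP=> j; case: (eqVneq i j) => [<-|hj]; first by rewrite !upd_i.
by rewrite !upd_j //; apply/eqP; have := h j; rewrite eq_sym hj.
Qed.

Definition fib (A : {set Sp p}) (c : 'I_(p i)) := [set x in A | x i == c].
Definition ext (A : {set Sp p}) (c : 'I_(p i)) := [set z | upd z c \in A].

Lemma card_ext A c : #|ext A c| = p i * #|fib A c|.
Proof.
have inj : injective (fun z : Sp p => (z i, upd z c)).
  move=> z w [e1 e2]; by rewrite -(upd_id z) -(upd_id w) -(upd_upd z c) e2 upd_upd e1 upd_id.
rewrite -(card_imset _ inj).
transitivity #|setX [set: 'I_(p i)] (fib A c)|; last by rewrite cardsX cardsT card_ord.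
apply: eq_card; case=> k x; rewrite !inE /=; apply/imsetP/andP.
  case=> z; rewrite inE => hz [e1 e2]; by rewrite e2 upd_i eqxx; split.
case=> xA /eqP xi; exists (upd x k); first by rewrite inE upd_upd -xi upd_id.
by rewrite upd_i upd_upd -xi upd_id.
Qed.

Lemma card_fib_sum (A : {set Sp p}) : #|A| = \sum_c #|fib A c|.
Proof.
rewrite -sum1_card (partition_big (fun x : Sp p => x i) predT) //=.
apply: eq_bigr => c _; rewrite -sum1_card; apply: eq_bigl => x; by rewrite !inE.
Qed.

Lemma card_fibC (A : {set Sp p}) c : #|A| = #|fib A c| + #|[set x in A | x i != c]|.
Proof.
rewrite -(cardsID (fib A c) A); congr (_ + _); apply: eq_card => x; rewrite !inE;
  by case: (x \in A); case: (x i == c).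
Qed.

End Upd.
Lemma sum_bound q (f : 'I_q -> nat) l0 K C :
  (forall m, m != l0 -> K * f m <= C) -> K * (\sum_m f m - f l0) <= q.-1 * C.
Proof.
move=> h; rewrite (bigD1 l0) //= addKn big_distrr /=.
apply: (@leq_trans (\sum_(i | i != l0) C)); first by apply: leq_sum.
by rewrite sum_nat_const cardC1 card_ord.
Qed.

Lemma sum_le_max q (f : 'I_q -> nat) M : (forall l, f l <= M) -> \sum_l f l <= q * M.
Proof.
move=> h; apply: (@leq_trans (\sum_l M)); first by apply: leq_sum.
by rewrite sum_nat_const card_ord.
Qed.

Lemma uniform q (f : 'I_q -> nat) M : (forall l, f l <= M) -> q * M = \sum_l f l ->
  forall l, f l = M.
Proof.
move=> h hs l; apply/eqP; rewrite eqn_leq h /=; rewrite leqNgt; apply/negP => lt.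
have hh : forall m, m != l -> 1 * f m <= M by move=> m _; rewrite mul1n h.
have := sum_bound hh.
rewrite mul1n -hs.
have : 0 < q by move: (ltn_ord l); lia.
have := h l. have : f l <= \sum_m f m by rewrite (bigD1 l) //= leq_addr.
rewrite -hs. nia.
Qed.

Section Num.
Variables (q : nat) (a b : 'I_q -> nat) (s t : nat).
Hypotheses (hq : 1 < q) (hs0 : 0 < s) (ht0 : 0 < t)
  (hs : s = \sum_l a l) (ht : t = \sum_l b l)
  (H : forall l m, l != m -> q * q * a l * b m <= s * t).

Lemma L1 l0 : q * s <= q * a l0 + s -> q * t <= q * b l0 + t.
Proof.
move=> hl.
have hm : forall m, m != l0 -> (q * q.-1) * b m <= t.
  move=> m hm; have := H (l := l0) (m := m); rewrite eq_sym => /(_ hm).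
  have : q * q * a l0 * b m >= s * (q * q.-1 * b m).
    have e : s * (q * q.-1 * b m) = q * (q * s - s) * b m.
      have -> : q * s - s = q.-1 * s by rewrite -{2}[s]mul1n -mulnBl subn1.
      set k := q.-1; set bm := b m; nia.
    rewrite e; apply: leq_mul => //; rewrite -mulnA; apply: leq_mul => //; lia.
  move=> h1 h2; have := leq_trans h1 h2; rewrite leq_pmul2l //.
have := sum_bound hm; rewrite -ht.
have hb : b l0 <= t by rewrite ht (bigD1 l0) //= leq_addr.
move=> h. have h' : q.-1 * (q * (t - b l0)) <= q.-1 * t.
  by move: h; rewrite mulnA [q.-1 * q]mulnC.
rewrite leq_pmul2l in h'; last by lia.
nia.
Qed.

Lemma L2 l0 : (forall l, a l <= a l0) -> q * s <= q * a l0 + s \/ q * a l0 = s.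
Proof.
move=> hmax.
have h0 : s <= q * a l0 by rewrite hs; apply: sum_le_max.
case: (leqP (q * s) (q * a l0 + s)) => [h1|h1]; first by left.
right; apply/eqP; rewrite eqn_leq h0 andbT leqNgt; apply/negP => h2.
have hb : b l0 <= t by rewrite ht (bigD1 l0) //= leq_addr.
have ha : a l0 <= s by rewrite hs (bigD1 l0) //= leq_addr.
have hh1 : forall m, m != l0 -> q * q * a l0 * b m <= s * t.
  by move=> m hm; apply: H; rewrite eq_sym.
have E1 := sum_bound hh1.
have hh : forall m, m != l0 -> q * q * b l0 * a m <= s * t.
  move=> m hm; have := H hm.
  by rewrite -[q * q * b l0 * a m]mulnA [b l0 * a m]mulnC mulnA.
have E2 := sum_bound hh.
rewrite -ht in E1; rewrite -hs in E2.
set M := a l0 in h0 h1 h2 ha E1 E2 *; set b0 := b l0 in hb E1 E2 *.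
set S1 := s - M in E2; set T1 := t - b0 in E1.
have eS : s = M + S1 by rewrite /S1; lia.
have eT : t = b0 + T1 by rewrite /T1; lia.
have E3 : q * q * M * S1 * t <= q.-1 * s * s * t.
  have := leq_add (leq_mul E1 (leqnn S1)) (leq_mul E2 (leqnn M)).
  move=> h; apply: leq_trans _ (leq_trans h _); first by rewrite eT; nia.
  rewrite eS; nia.
rewrite leq_pmul2r // in E3.
have hp : 0 < (q * M - s) * (q.-1 * s - q * M).
  rewrite muln_gt0; apply/andP; split; lia.
nia.
Qed.

End Num.

Section Main.
Variables (n r : nat) (p : 'I_n -> nat).
Hypotheses (hrn : r <= n) (hp : forall i, 2 <= p i).

Lemma agreeC (x y : Sp p) : agree x y = agree y x.
Proof. by apply: eq_card => j; rewrite !inE eq_sym. Qed.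

Lemma maximal_sym (A B : {set Sp p}) : maximal_pair r A B -> maximal_pair r B A.
Proof.
case=> hc hm; split.
  by move=> x y hx hy; rewrite /r_intersecting agreeC; apply: hc.
move=> A' B' hc'; rewrite mulnC [#|B| * _]mulnC; apply: hm.
by move=> x y hx hy; rewrite /r_intersecting agreeC; apply: hc'.
Qed.

Lemma nonempty (A B : {set Sp p}) : maximal_pair r A B -> 0 < #|A| /\ 0 < #|B|.
Proof.
case=> _ hm.
pose x0 : Sp p := [ffun j => Ordinal (leq_trans (isT : 0 < 2) (hp j))].
have : 1 * 1 <= #|A| * #|B|.
  rewrite -(cards1 x0); apply: hm => x y; rewrite !inE => /eqP -> /eqP ->.
  rewrite /r_intersecting /agree.
  suff -> : [set i0 | x0 i0 == x0 i0] = setT by rewrite cardsT card_ord.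
  by apply/setP => j; rewrite !inE eqxx.
rewrite mul1n muln_gt0 => /andP [] //.
Qed.

Lemma main_A (A B : {set Sp p}) (hmax : maximal_pair r A B) (i : 'I_n)
  (hrel : relevant i A) :
  exists l : 'I_(p i),
    #|[set x in A | x i != l]| * p i <= #|A| /\
    #|[set y in B | y i != l]| * p i <= #|B|.
Proof.
have [hs0 ht0] := nonempty hmax.
have hq : 1 < p i by apply: hp.
have hext : forall (A B : {set Sp p}) (l m : 'I_(p i)), cross_int r A B -> l != m ->
    cross_int r (ext A l) (ext B m).
  move=> A1 B1 l m hc lm x y; rewrite !inE => hx hy.
  exact: leq_trans (hc _ _ hx hy) (agree_upd _ _ lm).
have H : forall l m : 'I_(p i), l != m ->
    p i * p i * #|fib A l| * #|fib B m| <= #|A| * #|B|.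
  move=> l m lm; have := hmax.2 _ _ (hext _ _ _ _ hmax.1 lm).
  by rewrite !card_ext mulnA [_ * p i]mulnC !mulnA.
have H' : forall l m : 'I_(p i), l != m ->
    p i * p i * #|fib B l| * #|fib A m| <= #|B| * #|A|.
  move=> l m lm; rewrite [#|B| * _]mulnC -mulnA [#|fib B l| * _]mulnC mulnA; apply: H.
  by rewrite eq_sym.
have hs := card_fib_sum i A; have ht := card_fib_sum i B.
have conclude : forall l : 'I_(p i), p i * #|A| <= p i * #|fib A l| + #|A| ->
    p i * #|B| <= p i * #|fib B l| + #|B| -> exists l : 'I_(p i),
    #|[set x in A | x i != l]| * p i <= #|A| /\
    #|[set y in B | y i != l]| * p i <= #|B|.
  move=> l h1 h2; exists l; rewrite (card_fibC A l) (card_fibC B l) in h1 h2 *.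
  by split; nia.
have c0 : 'I_(p i) := Ordinal (ltnW hq).
have [l0 _ hl0] := @arg_maxnP _ c0 predT (fun c => #|fib A c|) isT.
have hl0' : forall l : 'I_(p i), #|fib A l| <= #|fib A l0|.
  by move=> l; exact: (hl0 l isT).
case: (leqP (p i * #|A|) (p i * #|fib A l0| + #|A|)) => [h1|hlt].
  by apply: (conclude l0) => //; apply: (L1 hq hs0 ht0 hs ht H).
case: (L2 hq hs0 ht0 hs ht H hl0') => [h1|h1]; first by rewrite leqNgt hlt in h1.
have [m0 _ hm0] := @arg_maxnP _ c0 predT (fun c => #|fib B c|) isT.
have hm0' : forall l : 'I_(p i), #|fib B l| <= #|fib B m0| by move=> l; exact: (hm0 l isT).
case: (leqP (p i * #|B|) (p i * #|fib B m0| + #|B|)) => [h2|hlt2].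
  by apply: (conclude m0) => //; apply: (L1 hq ht0 hs0 ht hs H').
case: (L2 hq ht0 hs0 ht hs H' hm0') => [h2|h2]; first by rewrite leqNgt hlt2 in h2.
have ua : forall l : 'I_(p i), p i * #|fib A l| = #|A|.
  move=> l; rewrite (uniform hl0' _ l) //; by rewrite h1.
have ub : forall l : 'I_(p i), p i * #|fib B l| = #|B|.
  move=> l; rewrite (uniform hm0' _ l) //; by rewrite h2.
have hq3 : 2 < p i by nia.
exfalso; apply: hrel => x y hd hx; apply/negPn/negP => hy.
set l := x i; set m := y i.
have lm : l != m.
  apply/negP => /eqP e.
  have exy : x = y.
    transitivity (upd x m); first by rewrite -e /l upd_id.
    by rewrite (differ_upd m hd) /m upd_id.
  by move: hy; rewrite -exy hx.
have : 0 < #|~: [set l; m]|.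
  have := cardsC [set l; m]; rewrite card_ord.
  have := cards2 l m; rewrite lm /= => ->; lia.
case/card_gt0P => k; rewrite !inE => /norP [kl km].
set U := ext A l :|: ext A m; set V := ext B k.
have hc : cross_int r U V.
  move=> z w; rewrite inE => /orP [hz|hz] hw.
    by apply: (hext _ _ _ _ hmax.1 _ _ _ hz hw); rewrite eq_sym.
  by apply: (hext _ _ _ _ hmax.1 _ _ _ hz hw); rewrite eq_sym.
have hU : #|A| < #|U|.
  rewrite -(ua m) -card_ext.
  have xl : x \in ext A l by rewrite inE /l upd_id.
  have xm : x \notin ext A m by rewrite inE (differ_upd _ hd) /m upd_id.
  apply: (@leq_trans #|x |: ext A m|); first by rewrite cardsU1 xm.
  apply: subset_leq_card; apply/subsetP => z; rewrite !inE => /orP [/eqP ->|->].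
    by move: xl; rewrite inE => ->.
  by rewrite orbT.
have hV : #|V| = #|B| by rewrite card_ext ub.
have := hmax.2 _ _ hc; rewrite hV leqNgt ltn_pmul2r // hU //.
Qed.
End Main.

Theorem lemma9 (n r : nat) (p : 'I_n -> nat)
  (hr1 : 1 <= r) (hrn : r <= n) (hp : forall i, 2 <= p i)
  (A B : {set Sp p}) (hmax : maximal_pair r A B)
  (i : 'I_n) (hrel : relevant i A \/ relevant i B) :
  exists l : 'I_(p i),
    #|[set x in A | x i != l]| * p i <= #|A| /\
    #|[set y in B | y i != l]| * p i <= #|B|.
Proof.
case: hrel => h; first exact: (main_A hrn hp hmax h).
have [l [h1 h2]] := main_A hrn hp (maximal_sym hmax) h.
by exists l.
Qed.
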